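(* Consider the perturbed Collins First Form $$\dot x=-y+x^2y+\varepsilon\sum_{0\le i+j\le3}a_{i,j}x^iy^j,\qquad \dot y=x+xy^2+\varepsilon\sum_{0\le i+j\le3}b_{i,j}x^iy^j,$$ with real coefficients. Then the unperturbed equation is $dr/d\theta=r^3\cos\theta\sin\theta$, whose solution with $r(0)=z$ is $r(\theta,z)=z/\sqrt{1-z^2\sin^2\theta}$, which is $2\pi$-periodic and positive exactly for $z\in D=(0,1)$, and the first order averaged function $f_1$ satisfies, for $z\in(0,1)$ and $s=\sqrt{1-z^2}\in(0,1)$, $$z\,f_1(z)=\pi(1-s)\Big((b_{0,1}-b_{0,3}-b_{2,1})s^3+(b_{0,1}-2a_{3,0}-b_{0,3}+b_{2,1})s^2+(a_{1,0}-a_{1,2}+a_{3,0}+2b_{0,3})s+a_{1,0}+a_{1,2}+a_{3,0}\Big).$$ In particular, $f_1$ has at most $3$ simple zeros in $(0,1)$, and there are coefficient choices for which it has exactly $3$; hence first order averaging yields at most three limit cycles of this system, and three is reached.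
   Context: Averaging framework (first order): in polar coordinates $x=r\cos\theta,y=r\sin\theta$, write $dr/d\theta=F_0(\theta,r)+\varepsilon F_1(\theta,r)+O(\varepsilon^2)$; let $r(\theta,z)$ solve $dr/d\theta=F_0$ with $r(0,z)=z$ and $Y(\theta,z)$ solve $Y'=\partial_rF_0(\theta,r(\theta,z))Y$, $Y(0,z)=1$. The first order averaged function is $f_1(z)=Y(2\pi,z)\int_0^{2\pi}Y(s,z)^{-1}F_1(s,r(s,z))\,ds$. Each simple zero of $f_1$ in $D$ gives, for $|\varepsilon|$ small, a limit cycle bifurcating from a periodic orbit of the unperturbed center. *)

(* Defs.v *)
From Stdlib Require Import Reals Lra.
From Coquelicot Require Import Coquelicot.
Open Scope R_scope.

Definition cubic_pert (c : nat -> nat -> R) (x y : R) : R :=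
  sum_f_R0 (fun i => sum_f_R0 (fun j => c i j * x ^ i * y ^ j) (3 - i)) 3.

Definition collinsP (a : nat -> nat -> R) (eps x y : R) : R :=
  - y + x ^ 2 * y + eps * cubic_pert a x y.
Definition collinsQ (b : nat -> nat -> R) (eps x y : R) : R :=
  x + x * y ^ 2 + eps * cubic_pert b x y.

(* dr/dtheta in polar coordinates x = r cos th, y = r sin th:
   dr/dth = (dr/dt)/(dth/dt) = r (x P + y Q) / (x Q - y P). *)
Definition Fpolar (a b : nat -> nat -> R) (th r eps : R) : R :=
  let x := r * cos th in
  let y := r * sin th in
  let P := collinsP a eps x y in
  let Q := collinsQ b eps x y in
  r * (x * P + y * Q) / (x * Q - y * P).

(* F0 and F1 : coefficients of eps^0 and eps^1 in the expansion in eps. *)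
Definition F0 (th r : R) : R := Fpolar (fun _ _ => 0) (fun _ _ => 0) th r 0.
Definition F1 (a b : nat -> nat -> R) (th r : R) : R :=
  Derive (fun eps => Fpolar a b th r eps) 0.

(* First order averaged function, built from the solution r(th,z) of
   dr/dth = F0 with r(0,z) = z and the solution Y(th,z) of the variational
   equation Y' = d_r F0(th, r(th,z)) Y, Y(0,z) = 1. *)
Definition f1 (a b : nat -> nat -> R) (rr Y : R -> R -> R) (z : R) : R :=
  Y (2 * PI) z * RInt (fun s => / Y s z * F1 a b s (rr s z)) 0 (2 * PI).

Definition rsol (th z : R) : R := z / sqrt (1 - z ^ 2 * (sin th) ^ 2).

Definition simple_zero (f : R -> R) (z : R) : Prop :=
  f z = 0 /\ exists l, is_derive f z l /\ l <> 0.

Definition f1_formula (a b : nat -> nat -> R) (z : R) : R :=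
  let s := sqrt (1 - z ^ 2) in
  PI * (1 - s) *
   ((b 0%nat 1%nat - b 0%nat 3%nat - b 2%nat 1%nat) * s ^ 3
    + (b 0%nat 1%nat - 2 * a 3%nat 0%nat - b 0%nat 3%nat + b 2%nat 1%nat) * s ^ 2
    + (a 1%nat 0%nat - a 1%nat 2%nat + a 3%nat 0%nat + 2 * b 0%nat 3%nat) * s
    + a 1%nat 0%nat + a 1%nat 2%nat + a 3%nat 0%nat).

(* Main.v *)
Require Import Defs.
From Stdlib Require Import Reals Lra Lia List FunctionalExtensionality.
From Coquelicot Require Import Coquelicot.
Open Scope R_scope.

Lemma cs1 th : cos th ^ 2 + sin th ^ 2 = 1.
Proof. rewrite <- (sin2_cos2 th). unfold Rsqr. ring. Qed.

Lemma F0_eq th r : F0 th r = r ^ 3 * cos th * sin th.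
Proof.
  unfold F0, Fpolar, collinsP, collinsQ. cbv zeta.
  destruct (Req_dec r 0) as [->|Hr].
  - unfold Rdiv. ring.
  - match goal with |- ?N / ?D = _ =>
      assert (HD : D = r ^ 2 * (cos th ^ 2 + sin th ^ 2)) by ring;
      assert (HN : N = r ^ 5 * cos th * sin th * (cos th ^ 2 + sin th ^ 2)) by ring;
      rewrite HD, HN end.
    rewrite cs1. field. auto.
Qed.

Lemma dF0 th x : Derive (fun r => F0 th r) x = 3 * x ^ 2 * cos th * sin th.
Proof.
  apply is_derive_unique.
  apply is_derive_ext with (f := fun r => r ^ 3 * cos th * sin th).
  { intros; symmetry; apply F0_eq. }
  auto_derive; auto. ring.
Qed.

Lemma deriv0_const (f : R -> R) : (forall x, is_derive f x 0) -> forall a b, f a = f b.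
Proof.
  intros H a b.
  pose proof (is_RInt_derive f (fun _ => 0) a b (fun x _ => H x)
     (fun x _ => continuous_const (U:=R_UniformSpace) (0:R) x)) as HI.
  apply is_RInt_unique in HI. rewrite RInt_const in HI.
  unfold minus, plus, opp, scal in HI; simpl in HI. unfold mult in HI; simpl in HI.
  lra.
Qed.

Lemma F1_eq a b th r : r <> 0 ->
  F1 a b th r = cos th * cubic_pert a (r * cos th) (r * sin th)
     + sin th * cubic_pert b (r * cos th) (r * sin th)
     - r ^ 2 * cos th * sin th * (cos th * cubic_pert b (r * cos th) (r * sin th)
                                  - sin th * cubic_pert a (r * cos th) (r * sin th)).
Proof.
  intro Hr. unfold F1. apply is_derive_unique.
  unfold Fpolar, collinsP, collinsQ. cbv zeta.
  set (A := cubic_pert a (r * cos th) (r * sin th)).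
  set (B := cubic_pert b (r * cos th) (r * sin th)).
  set (c := cos th). set (s := sin th).
  assert (Hcs : c ^ 2 + s ^ 2 = 1) by apply cs1.
  auto_derive.
  - match goal with |- ?D <> 0 =>
      replace D with (r^2 * (c^2+s^2)) by ring end.
    rewrite Hcs. apply Rmult_integral_contrapositive; split; [now apply pow_nonzero | lra].
  - match goal with |- _ * / ?D + _ = _ =>
      replace D with (r^2 * (c^2+s^2)) by ring end.
    match goal with |- ?x = ?y => change (@eq R x y) end.
    match goal with |- _ + r * ?N0 * _ = _ =>
      replace N0 with (r^4 * c * s * (c^2+s^2)) by ring end.
    rewrite Hcs. field; auto.
Qed.


Lemma sin2_le1 th : sin th ^ 2 <= 1.
Proof. pose proof (cs1 th). nra. Qed.

Lemma q_pos z th : 0 < z < 1 -> 0 < 1 - z ^ 2 * sin th ^ 2.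
Proof. intros Hz. pose proof (sin2_le1 th). pose proof (pow2_ge_0 (sin th)). nra. Qed.

Lemma sin_2PIp th : sin (th + 2 * PI) = sin th.
Proof. rewrite sin_plus, sin_2PI, cos_2PI. ring. Qed.
Lemma cos_2PIp th : cos (th + 2 * PI) = cos th.
Proof. rewrite cos_plus, sin_2PI, cos_2PI. ring. Qed.

Lemma rsol_deriv z th : 0 < z < 1 ->
  is_derive (fun t => rsol t z) th (F0 th (rsol th z)).
Proof.
  intros Hz. rewrite F0_eq. unfold rsol.
  pose proof (q_pos z th Hz) as Hq.
  pose proof (sqrt_lt_R0 _ Hq) as Hw.
  auto_derive;
  replace (1 + - (z * (z * 1) * (sin th * (sin th * 1)))) with (1 - z ^ 2 * sin th ^ 2) by ring.
  - repeat split; lra.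
  - match goal with |- ?x = ?y => change (@eq R x y) end.
    set (w := sqrt (1 - z ^ 2 * sin th ^ 2)) in *.
    assert (Hw2 : w ^ 2 = 1 - z ^ 2 * sin th ^ 2) by (apply pow2_sqrt; lra).
    field. lra.
Qed.

Lemma part3 z : (0 < z < 1) <->
     (forall th, 0 < 1 - z ^ 2 * (sin th) ^ 2 /\ 0 < rsol th z).
Proof.
  split.
  - intros Hz th. split. now apply q_pos.
    unfold rsol. apply Rdiv_lt_0_compat. lra. apply sqrt_lt_R0. now apply q_pos.
  - intros H. destruct (H (PI/2)) as [H1 H2]. rewrite sin_PI2 in H1. unfold rsol in H2. rewrite sin_PI2 in H2.
    unfold rsol in H2. pose proof (sqrt_lt_R0 _ H1) as Hw.
    assert (0 < z).
    { replace z with (z / sqrt (1 - z ^ 2 * 1 ^ 2) * sqrt (1 - z ^ 2 * 1 ^ 2)) by (field; lra).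
      apply Rmult_lt_0_compat; lra. }
    split; auto. nra.
Qed.


Lemma uniq_r (v u : R -> R) :
  (forall t, is_derive v t (v t ^ 3 * cos t * sin t)) ->
  (forall t, is_derive u t (u t ^ 3 * cos t * sin t)) ->
  v 0 = u 0 -> forall t, v t = u t.
Proof.
  intros Hv Hu H0.
  set (g := fun t => cos t * sin t * (v t ^ 2 + v t * u t + u t ^ 2)).
  assert (Hgc : forall t, continuous g t).
  { intro t. apply (ex_derive_continuous (K:=R_AbsRing) (V:=R_NormedModule)). unfold g. auto_derive.
    repeat split; eexists; eauto. }
  set (G := fun t => RInt g 0 t).
  assert (HG : forall t, is_derive G t (g t)).
  { intro t. apply is_derive_RInt with (a := 0); auto.
    apply filter_forall. intro b. apply RInt_correct.
    apply ex_RInt_continuous. intros; apply Hgc. }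
  set (h := fun t => (v t - u t) * exp (- G t)).
  assert (Hh : forall t, is_derive h t 0).
  { intro t. unfold h. auto_derive.
    - repeat split; eexists; eauto.
    - assert (Dv : Derive (fun x : R => v x) t = v t ^3 * cos t * sin t) by (apply is_derive_unique; apply Hv).
      assert (Du : Derive (fun x : R => u x) t = u t ^3 * cos t * sin t) by (apply is_derive_unique; apply Hu).
      assert (DG : Derive (fun x : R => G x) t = g t) by (apply is_derive_unique; apply HG).
      rewrite Dv, Du, DG.
      unfold g. ring. }
  intro t. pose proof (deriv0_const h Hh t 0) as E.
  unfold h in E. rewrite H0 in E. replace (u 0 - u 0) with 0 in E by ring.
  rewrite Rmult_0_l in E. pose proof (exp_pos (- G t)).
  apply Rmult_integral in E. destruct E; lra.
Qed.

Definition W (z th : R) := sqrt (1 - z ^ 2 * sin th ^ 2).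

Lemma W_pos z th : 0 < z < 1 -> 0 < W z th.
Proof. intros; apply sqrt_lt_R0, q_pos; auto. Qed.

Lemma uniq_Y z (y : R -> R) : 0 < z < 1 ->
  (forall t, is_derive y t (3 * rsol t z ^ 2 * cos t * sin t * y t)) ->
  y 0 = 1 -> forall t, y t = / W z t ^ 3.
Proof.
  intros Hz Hy H0.
  set (k := fun t => y t * sqrt (1 - z ^ 2 * sin t ^ 2) ^ 3).
  assert (Hk : forall t, is_derive k t 0).
  { intro t. pose proof (q_pos z t Hz) as Hq. pose proof (W_pos z t Hz) as Hw.
    unfold W in Hw. unfold k. auto_derive;
    replace (1 + - (z * (z * 1) * (sin t * (sin t * 1)))) with (1 - z ^ 2 * sin t ^ 2) by ring.
    - repeat split; try lra. eexists; eauto.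
    - assert (Dy : Derive (fun x : R => y x) t = 3 * rsol t z ^ 2 * cos t * sin t * y t)
        by (apply is_derive_unique; apply Hy).
      rewrite Dy. unfold rsol.
      match goal with |- ?x = ?y => change (@eq R x y) end.
      field. lra. }
  intro t. pose proof (deriv0_const k Hk t 0) as E. unfold k in E.
  rewrite H0, sin_0 in E. replace (1 - z ^ 2 * 0 ^ 2) with 1 in E by ring.
  rewrite sqrt_1 in E. pose proof (W_pos z t Hz). unfold W in *.
  apply (Rmult_eq_reg_r (sqrt (1 - z ^ 2 * sin t ^ 2) ^ 3)).
  rewrite E. field. lra. apply pow_nonzero. lra.
Qed.


Section Per.
Variable f : R -> R.
Hypothesis fc : forall x, continuous f x.
Hypothesis fp : forall x, f (x + 2 * PI) = f x.

Lemma exR a b : ex_RInt f a b.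
Proof. apply (ex_RInt_continuous (V:=R_CompleteNormedModule)). intros; apply fc. Qed.

Lemma per_shift a : RInt f a (a + 2 * PI) = RInt f 0 (2 * PI).
Proof.
  set (F := fun x => RInt f 0 x).
  assert (HF : forall x, is_derive F x (f x)).
  { intro x. apply is_derive_RInt with (a := 0); auto.
    apply filter_forall. intro b. apply RInt_correct. apply exR. }
  set (K := fun x => F (x + 2 * PI) - F x).
  assert (HK : forall x, is_derive K x 0).
  { intro x. unfold K. auto_derive.
    - split; [eexists; apply HF | split; [eexists; apply HF| auto]].
    - assert (D1 : Derive (fun x : R => F x) (x + 2 * PI) = f (x + 2 * PI))
        by (apply is_derive_unique; apply HF).
      assert (D2 : Derive (fun x : R => F x) x = f x)
        by (apply is_derive_unique; apply HF).
      rewrite D1, D2, fp. ring. }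
  pose proof (deriv0_const K HK a 0) as E. unfold K, F in E.
  rewrite Rplus_0_l, RInt_point in E.
  pose proof (RInt_Chasles f 0 a (a + 2 * PI) (exR _ _) (exR _ _)) as C.
  unfold plus, zero in *; simpl in *. unfold F. lra.
Qed.

Lemma shift_int a : RInt (fun t => f (t + a)) 0 (2 * PI) = RInt f 0 (2 * PI).
Proof.
  pose proof (RInt_comp_lin f 1 a 0 (2 * PI) (exR _ _)) as E.
  rewrite <- (per_shift a).
  replace (1 * 0 + a) with a in E by ring.
  replace (1 * (2 * PI) + a) with (a + 2 * PI) in E by ring.
  rewrite <- E. apply RInt_ext. intros x _.
  unfold scal; simpl; unfold mult; simpl. rewrite Rmult_1_l. f_equal. ring.
Qed.

Lemma cont_aff u v x : continuous (fun t => f (u * t + v)) x.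
Proof.
  apply (continuous_comp (fun t => u * t + v) f).
  - apply (ex_derive_continuous (K:=R_AbsRing) (V:=R_NormedModule)). auto_derive. auto.
  - apply fc.
Qed.

Lemma exR_aff u v a b : ex_RInt (fun t => f (u * t + v)) a b.
Proof. apply (ex_RInt_continuous (V:=R_CompleteNormedModule)). intros; apply cont_aff. Qed.

Lemma neg_int : RInt (fun t => f (- t)) 0 (2 * PI) = RInt f 0 (2 * PI).
Proof.
  pose proof (RInt_comp_lin f (-1) 0 0 (2 * PI) (exR _ _)) as E.
  rewrite RInt_scal in E by apply exR_aff.
  replace (-1 * 0 + 0) with 0 in E by ring.
  replace (-1 * (2 * PI) + 0) with (-2 * PI) in E by ring.
  rewrite <- (opp_RInt_swap f) in E by apply exR.
  pose proof (per_shift (-2 * PI)) as P.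
  replace (-2 * PI + 2 * PI) with 0 in P by ring. rewrite P in E.
  unfold scal, opp in E; simpl in E; unfold mult in E; simpl in E.
  rewrite <- (RInt_ext (fun t => f (-1 * t + 0))). lra.
  intros x _. f_equal. ring.
Qed.
End Per.

Lemma sym4 (f : R -> R) : (forall x, continuous f x) -> (forall x, f (x + 2 * PI) = f x) ->
  RInt f 0 (2 * PI) =
  RInt (fun t => (f t + f (PI - t) + f (- t) + f (PI + t)) / 4) 0 (2 * PI).
Proof.
  intros fc fp.
  set (g := fun t => f (t + PI)).
  assert (gc : forall x, continuous g x).
  { intro x. unfold g. apply (continuous_ext (fun t => f (1 * t + PI))).
    intros; f_equal; ring. apply cont_aff; auto. }
  assert (gp : forall x, g (x + 2 * PI) = g x).
  { intro x. unfold g. replace (x + 2 * PI + PI) with (x + PI + 2 * PI) by ring. apply fp. }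
  assert (I1 : RInt (fun t => f (PI - t)) 0 (2 * PI) = RInt f 0 (2 * PI)).
  { transitivity (RInt (fun t => g (- t)) 0 (2 * PI)).
    { apply RInt_ext. intros; unfold g. f_equal; ring. }
    rewrite (neg_int g gc gp). unfold g. apply (shift_int f fc fp PI). }
  assert (I2 : RInt (fun t => f (PI + t)) 0 (2 * PI) = RInt f 0 (2 * PI)).
  { rewrite <- (shift_int f fc fp PI). apply RInt_ext. intros; f_equal; ring. }
  pose proof (neg_int f fc fp) as I3.
  assert (ex1 : ex_RInt (fun t => f (PI - t)) 0 (2 * PI)).
  { apply (ex_RInt_ext (fun t => f (-1 * t + PI))). intros; f_equal; ring. apply exR_aff; auto. }
  assert (ex2 : ex_RInt (fun t => f (PI + t)) 0 (2 * PI)).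
  { apply (ex_RInt_ext (fun t => f (1 * t + PI))). intros; f_equal; ring. apply exR_aff; auto. }
  assert (ex3 : ex_RInt (fun t => f (- t)) 0 (2 * PI)).
  { apply (ex_RInt_ext (fun t => f (-1 * t + 0))). intros; f_equal; ring. apply exR_aff; auto. }
  assert (ex0 : ex_RInt f 0 (2 * PI)) by (apply exR; auto).
  apply (RInt_correct (V:=R_CompleteNormedModule)) in ex0, ex1, ex2, ex3.
  rewrite I1 in ex1. rewrite I2 in ex2. rewrite I3 in ex3.
  pose proof (is_RInt_scal _ _ _ (/4) _ (is_RInt_plus _ _ _ _ _ _ (is_RInt_plus _ _ _ _ _ _ (is_RInt_plus _ _ _ _ _ _ ex0 ex1) ex3) ex2)) as S.
  apply is_RInt_unique in S.
  unfold scal, plus in S; simpl in S; unfold mult in S; simpl in S.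
  rewrite (RInt_ext (fun t => (f t + f (PI - t) + f (- t) + f (PI + t)) / 4)
     (fun y => / 4 * (f y + f (PI - y) + f (- y) + f (PI + y)))).
  rewrite S. set (I := RInt f 0 (2 * PI)). clearbody I. simpl in I. match goal with |- @eq _ ?x ?y => change (@eq R x y) end. field.
  intros. match goal with |- @eq _ ?x ?y => change (@eq R x y) end. field.
Qed.



Definition Ef (a b : nat -> nat -> R) z th :=
  W z th * (cos th * cubic_pert a (z / W z th * cos th) (z / W z th * sin th)
   + (1 - z ^ 2) * sin th * cubic_pert b (z / W z th * cos th) (z / W z th * sin th)).

Definition alpha (a b : nat -> nat -> R) z :=
  (- a 1%nat 2%nat * (1 - z ^ 2) + a 3%nat 0%nat * (1 - z ^ 2) ^ 2
   + (1 - z ^ 2) * b 0%nat 3%nat - (1 - z ^ 2) ^ 2 * b 2%nat 1%nat) / z.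
Definition beta (a b : nat -> nat -> R) z :=
  a 1%nat 0%nat * z / 2 + a 1%nat 2%nat * (2 - z ^ 2) / (2 * z)
  + a 3%nat 0%nat * (3 * z / 2 - 1 / z)
  + (1 - z ^ 2) * (b 0%nat 1%nat * z / 2 - b 0%nat 3%nat * (1 / z + z / 2)
                   + b 2%nat 1%nat * (2 - z ^ 2) / (2 * z)).
Definition gamma (a b : nat -> nat -> R) z :=
  a 1%nat 0%nat * z / 2 - a 1%nat 2%nat * z / 2 + a 3%nat 0%nat * z / 2
  + (1 - z ^ 2) * (- b 0%nat 1%nat * z / 2 + b 0%nat 3%nat * z / 2 - b 2%nat 1%nat * z / 2).

Lemma W_PI_x z t : W z (PI - t) = W z t.
Proof. unfold W. now rewrite sin_PI_x. Qed.
Lemma W_neg z t : W z (- t) = W z t.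
Proof. unfold W. rewrite sin_neg. f_equal. ring. Qed.
Lemma W_PI_p z t : W z (PI + t) = W z t.
Proof. unfold W. rewrite Rplus_comm, neg_sin. f_equal. ring. Qed.

Lemma sum4 a b z t : 0 < z < 1 ->
  (Ef a b z t + Ef a b z (PI - t) + Ef a b z (- t) + Ef a b z (PI + t)) / 4 =
  alpha a b z / (1 - z ^ 2 * sin t ^ 2) + beta a b z + gamma a b z * (cos t ^ 2 - sin t ^ 2).
Proof.
  intros Hz. unfold Ef. rewrite W_PI_x, W_neg, W_PI_p.
  rewrite sin_PI_x, Rtrigo_facts.cos_pi_minus, sin_neg, cos_neg.
  rewrite (Rplus_comm PI t), neg_sin, neg_cos.
  pose proof (W_pos z t Hz) as Hw. pose proof (q_pos z t Hz) as Hq.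
  assert (Hw2 : W z t ^ 2 = 1 - z ^ 2 * sin t ^ 2) by (unfold W; apply pow2_sqrt; lra).
  assert (Hc2 : cos t ^ 2 = 1 - sin t ^ 2) by (pose proof (cs1 t); lra).
  set (w := W z t) in *. set (c := cos t) in *. set (s := sin t) in *.
  transitivity (a 1%nat 0%nat * z * c^2 + a 1%nat 2%nat * z^3 * c^2 * s^2 / w^2
     + a 3%nat 0%nat * z^3 * (c^2)^2 / w^2
     + (1 - z^2) * (b 0%nat 1%nat * z * s^2 + b 0%nat 3%nat * z^3 * (s^2)^2 / w^2
     + b 2%nat 1%nat * z^3 * c^2 * s^2 / w^2)).
  - unfold cubic_pert. simpl. field. lra.
  - rewrite Hw2, Hc2. unfold alpha, beta, gamma. field. split; lra.
Qed.


Definition J t th := (th - atan ((1 - t) * sin th * cos th / (cos th ^ 2 + t * sin th ^ 2))) / t.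

Lemma J_deriv t th : 0 < t -> is_derive (J t) th (/ (cos th ^ 2 + t ^ 2 * sin th ^ 2)).
Proof.
  intros Ht. unfold J.
  assert (Hc : cos th ^ 2 + sin th ^ 2 = 1) by apply cs1.
  assert (HD : 0 < cos th ^ 2 + t * sin th ^ 2).
  { pose proof (pow2_ge_0 (cos th)). pose proof (pow2_ge_0 (sin th)).
    destruct (Req_dec (sin th ^ 2) 0); nra. }
  assert (HD2 : 0 < cos th ^ 2 + t ^ 2 * sin th ^ 2).
  { pose proof (pow2_ge_0 (cos th)). pose proof (pow2_ge_0 (sin th)).
    destruct (Req_dec (sin th ^ 2) 0); nra. }
  auto_derive.
  - replace (cos th * (cos th * 1) + t * (sin th * (sin th * 1))) with
      (cos th ^ 2 + t * sin th ^ 2) by ring. lra.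
  - match goal with |- ?x = ?y => change (@eq R x y) end.
    replace (cos th * (cos th * 1) + t * (sin th * (sin th * 1))) with
      (cos th ^ 2 + t * sin th ^ 2) by ring.
    transitivity ((cos th ^ 2 + sin th ^ 2) / (cos th ^ 2 + t ^ 2 * sin th ^ 2)).
    + field. repeat split.
      * replace (cos th ^ 2 + (t * sin th) ^ 2) with (cos th ^ 2 + t ^ 2 * sin th ^ 2) by ring. lra.
      * lra.
      * lra.
      * apply Rgt_not_eq. apply Rplus_lt_le_0_compat. nra.
        replace ((1 - t) * sin th * cos th * ((1 - t) * sin th * cos th)) with
          (((1 - t) * sin th * cos th) ^ 2) by ring. apply pow2_ge_0.
    + rewrite Hc. field. lra.
Qed.

Lemma int_Ev a b z : 0 < z < 1 ->
  RInt (fun th => alpha a b z / (1 - z ^ 2 * sin th ^ 2) + beta a b z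
                  + gamma a b z * (cos th ^ 2 - sin th ^ 2)) 0 (2 * PI)
  = 2 * PI * (alpha a b z / sqrt (1 - z ^ 2) + beta a b z).
Proof.
  intros Hz.
  assert (Hz2 : 0 < 1 - z ^ 2) by nra.
  set (t := sqrt (1 - z ^ 2)).
  assert (Ht : 0 < t) by (apply sqrt_lt_R0; lra).
  assert (Ht2 : t ^ 2 = 1 - z ^ 2) by (apply pow2_sqrt; lra).
  set (Fa := fun th => alpha a b z * J t th + beta a b z * th + gamma a b z * (sin th * cos th)).
  set (Ev := fun th => alpha a b z / (1 - z ^ 2 * sin th ^ 2) + beta a b z
                  + gamma a b z * (cos th ^ 2 - sin th ^ 2)).
  assert (HD : forall x, Rmin 0 (2*PI) <= x <= Rmax 0 (2*PI) -> is_derive Fa x (Ev x)).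
  {   intros x _. unfold Ev. unfold Fa. auto_derive.
      + exists (/ (cos x ^ 2 + t ^ 2 * sin x ^ 2)). apply (J_deriv t x Ht).
      + assert (DJ : Derive (fun x0 : R => J t x0) x = / (cos x ^ 2 + t ^ 2 * sin x ^ 2))
          by (apply is_derive_unique; apply J_deriv; auto).
        rewrite DJ.
        replace (cos x ^ 2 + t ^ 2 * sin x ^ 2) with (1 - z ^ 2 * sin x ^ 2).
        * match goal with |- ?x = ?y => change (@eq R x y) end. field.
          pose proof (q_pos z x Hz). lra.
        * rewrite Ht2. pose proof (cs1 x). nra.
  }
  assert (HC : forall x, Rmin 0 (2*PI) <= x <= Rmax 0 (2*PI) -> continuous Ev x).
  { intros x _. unfold Ev. apply (ex_derive_continuous (K:=R_AbsRing) (V:=R_NormedModule)).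
      auto_derive. pose proof (q_pos z x Hz).
      replace (1 + - (z * (z * 1) * (sin x * (sin x * 1)))) with (1 - z ^ 2 * sin x ^ 2) by ring.
      lra.
  }
  pose proof (is_RInt_derive _ _ _ _ HD HC) as HI.
  fold Ev. rewrite (is_RInt_unique _ _ _ _ HI).
  unfold Fa, J, minus, plus, opp; simpl. rewrite sin_2PI, cos_2PI, sin_0, cos_0.
  replace ((1 - t) * 0 * 1 / (1 * (1 * 1) + t * (0 * (0 * 1)))) with 0 by (field; lra).
  rewrite atan_0. field. lra.
Qed.


Lemma integrand_eq a b z s : 0 < z < 1 ->
  / (/ W z s ^ 3) * F1 a b s (rsol s z) = Ef a b z s.
Proof.
  intros Hz. pose proof (W_pos z s Hz) as Hw.
  assert (Hw2 : W z s ^ 2 = 1 - z ^ 2 * sin s ^ 2) by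
    (unfold W; apply pow2_sqrt; pose proof (q_pos z s Hz); lra).
  replace (rsol s z) with (z / W z s) by reflexivity.
  rewrite F1_eq. 2:{ apply Rgt_not_eq. apply Rdiv_lt_0_compat; lra. }
  unfold Ef.
  set (A := cubic_pert a (z / W z s * cos s) (z / W z s * sin s)).
  set (B := cubic_pert b (z / W z s * cos s) (z / W z s * sin s)).
  set (w := W z s) in *. pose proof (cs1 s) as Hcs.
  set (c := cos s) in *. set (si := sin s) in *.
  transitivity (w * (c * A * (w ^ 2 + z ^ 2 * si ^ 2)
      + si * B * (w ^ 2 - z ^ 2 * (c ^ 2 + si ^ 2) + z ^ 2 * si ^ 2))).
  - field. lra.
  - rewrite Hw2, Hcs. ring.
Qed.

Lemma Ef_cont a b z x : 0 < z < 1 -> continuous (Ef a b z) x.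
Proof.
  intros Hz. apply (ex_derive_continuous (K:=R_AbsRing) (V:=R_NormedModule)).
  unfold Ef, W, cubic_pert. simpl.
  pose proof (q_pos z x Hz) as Hq. pose proof (sqrt_lt_R0 _ Hq) as Hw.
  auto_derive.
  replace (1 + - (z * (z * 1) * (sin x * (sin x * 1)))) with (1 - z ^ 2 * sin x ^ 2) by ring.
  repeat split; lra.
Qed.

Lemma Ef_per a b z x : Ef a b z (x + 2 * PI) = Ef a b z x.
Proof.
  unfold Ef. assert (W z (x + 2 * PI) = W z x) by (unfold W; now rewrite sin_2PIp).
  rewrite H, sin_2PIp, cos_2PIp. reflexivity.
Qed.

Lemma int_Ef a b z : 0 < z < 1 ->
  RInt (Ef a b z) 0 (2 * PI) = 2 * PI * (alpha a b z / sqrt (1 - z ^ 2) + beta a b z).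
Proof.
  intros Hz. rewrite sym4.
  - rewrite <- (int_Ev a b z Hz). apply RInt_ext. intros. apply sum4; auto.
  - intros; apply Ef_cont; auto.
  - apply Ef_per.
Qed.

Lemma formula_eq a b z : 0 < z < 1 ->
  z * (2 * PI * (alpha a b z / sqrt (1 - z ^ 2) + beta a b z)) = f1_formula a b z.
Proof.
  intros Hz. unfold f1_formula. cbv zeta.
  assert (Hz2 : 0 < 1 - z ^ 2) by nra.
  set (t := sqrt (1 - z ^ 2)).
  assert (Ht : 0 < t) by (apply sqrt_lt_R0; lra).
  assert (Ht2 : z ^ 2 = 1 - t ^ 2) by (unfold t; rewrite pow2_sqrt; lra).
  unfold alpha, beta.
  transitivity (2 * PI * ((- a 1%nat 2%nat * (1 - z ^ 2) + a 3%nat 0%nat * (1 - z ^ 2) ^ 2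
   + (1 - z ^ 2) * b 0%nat 3%nat - (1 - z ^ 2) ^ 2 * b 2%nat 1%nat) / t
   + a 1%nat 0%nat * z ^ 2 / 2 + a 1%nat 2%nat * (2 - z ^ 2) / 2
   + a 3%nat 0%nat * (3 * z ^ 2 / 2 - 1)
   + (1 - z ^ 2) * (b 0%nat 1%nat * z ^ 2 / 2 - b 0%nat 3%nat * (1 + z ^ 2 / 2)
                   + b 2%nat 1%nat * (2 - z ^ 2) / 2))).
  - field. lra.
  - rewrite Ht2. field. lra.
Qed.

Lemma f1_val a b (rr Y : R -> R -> R) z : 0 < z < 1 ->
  (rr 0 z = z /\
   (forall th, is_derive (fun t => rr t z) th (F0 th (rr th z))) /\
   Y 0 z = 1 /\
   (forall th, is_derive (fun t => Y t z) th
                 (Derive (fun r => F0 th r) (rr th z) * Y th z))) ->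
  f1 a b rr Y z = 2 * PI * (alpha a b z / sqrt (1 - z ^ 2) + beta a b z).
Proof.
  intros Hz [Hr0 [Hrd [HY0 HYd]]].
  assert (Hr : forall t, rr t z = rsol t z).
  { apply (uniq_r (fun t => rr t z) (fun t => rsol t z)).
    - intro t. rewrite <- F0_eq. apply Hrd.
    - intro t. rewrite <- F0_eq. apply rsol_deriv; auto.
    - rewrite Hr0. unfold rsol. rewrite sin_0.
      replace (1 - z ^ 2 * 0 ^ 2) with 1 by ring. rewrite sqrt_1. field. }
  assert (HY : forall t, Y t z = / W z t ^ 3).
  { apply (uniq_Y z (fun t => Y t z)); auto.
    intro t. specialize (HYd t). rewrite dF0, Hr in HYd. exact HYd. }
  unfold f1. rewrite HY.
  assert (W z (2 * PI) = 1) as ->.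
  { unfold W. rewrite sin_2PI. replace (1 - z ^ 2 * 0 ^ 2) with 1 by ring. apply sqrt_1. }
  rewrite <- (int_Ef a b z Hz).
  replace (/ 1 ^ 3) with 1 by field. rewrite Rmult_1_l.
  apply RInt_ext. intros x _. rewrite HY, Hr. apply integrand_eq; auto.
Qed.


Definition Pc (a b : nat -> nat -> R) t :=
  (b 0%nat 1%nat - b 0%nat 3%nat - b 2%nat 1%nat) * t ^ 3
  + (b 0%nat 1%nat - 2 * a 3%nat 0%nat - b 0%nat 3%nat + b 2%nat 1%nat) * t ^ 2
  + (a 1%nat 0%nat - a 1%nat 2%nat + a 3%nat 0%nat + 2 * b 0%nat 3%nat) * t
  + (a 1%nat 0%nat + a 1%nat 2%nat + a 3%nat 0%nat).

Definition dPc (a b : nat -> nat -> R) t :=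
  3 * (b 0%nat 1%nat - b 0%nat 3%nat - b 2%nat 1%nat) * t ^ 2
  + 2 * (b 0%nat 1%nat - 2 * a 3%nat 0%nat - b 0%nat 3%nat + b 2%nat 1%nat) * t
  + (a 1%nat 0%nat - a 1%nat 2%nat + a 3%nat 0%nat + 2 * b 0%nat 3%nat).

Definition gfun a b x := PI * (1 - sqrt (1 - x ^ 2)) * Pc a b (sqrt (1 - x ^ 2)) / x.

Lemma formula_Pc a b z : f1_formula a b z = PI * (1 - sqrt (1 - z ^ 2)) * Pc a b (sqrt (1 - z ^ 2)).
Proof. unfold f1_formula, Pc. cbv zeta. ring. Qed.

Definition Hyp (rr Y : R -> R -> R) := forall z, 0 < z < 1 ->
        rr 0 z = z /\
        (forall th, is_derive (fun t => rr t z) th (F0 th (rr th z))) /\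
        Y 0 z = 1 /\
        (forall th, is_derive (fun t => Y t z) th
                      (Derive (fun r => F0 th r) (rr th z) * Y th z)).

Lemma f1_g a b rr Y z : Hyp rr Y -> 0 < z < 1 -> f1 a b rr Y z = gfun a b z.
Proof.
  intros H Hz. pose proof (f1_val a b rr Y z Hz (H z Hz)) as E.
  pose proof (formula_eq a b z Hz) as F. rewrite <- E, formula_Pc in F.
  unfold gfun. rewrite <- F. field. lra.
Qed.

Lemma f1_loc a b rr Y z : Hyp rr Y -> 0 < z < 1 ->
  locally z (fun x => gfun a b x = f1 a b rr Y x).
Proof.
  intros H Hz. apply (locally_interval _ z 0 1); simpl; try lra.
  intros y H1 H2. symmetry. apply f1_g; auto.
Qed.

Lemma g_deriv a b z : 0 < z < 1 ->
  is_derive (gfun a b) z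
    (let t := sqrt (1 - z ^ 2) in
     PI * ((z / t) * Pc a b t + (1 - t) * dPc a b t * (- z / t)) / z
     - PI * (1 - t) * Pc a b t / z ^ 2).
Proof.
  intros Hz. cbv zeta. assert (Hz2 : 0 < 1 - z ^ 2) by nra.
  pose proof (sqrt_lt_R0 _ Hz2) as Ht.
  unfold gfun, Pc, dPc. auto_derive.
  - replace (1 + - (z * (z * 1))) with (1 - z ^ 2) by ring. repeat split; lra.
  - replace (1 + - (z * (z * 1))) with (1 - z ^ 2) by ring.
    match goal with |- ?x = ?y => change (@eq R x y) end.
    field. lra.
Qed.

Lemma cubic4 c3 c2 c1 c0 t1 t2 t3 t4 :
  t1 <> t2 -> t1 <> t3 -> t1 <> t4 -> t2 <> t3 -> t2 <> t4 -> t3 <> t4 ->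
  c3 * t1 ^ 3 + c2 * t1 ^ 2 + c1 * t1 + c0 = 0 ->
  c3 * t2 ^ 3 + c2 * t2 ^ 2 + c1 * t2 + c0 = 0 ->
  c3 * t3 ^ 3 + c2 * t3 ^ 2 + c1 * t3 + c0 = 0 ->
  c3 * t4 ^ 3 + c2 * t4 ^ 2 + c1 * t4 + c0 = 0 ->
  c3 = 0 /\ c2 = 0 /\ c1 = 0 /\ c0 = 0.
Proof.
  intros d12 d13 d14 d23 d24 d34 E1 E2 E3 E4.
  assert (Q : forall u v, u <> v ->
     c3 * u ^ 3 + c2 * u ^ 2 + c1 * u + c0 = 0 ->
     c3 * v ^ 3 + c2 * v ^ 2 + c1 * v + c0 = 0 ->
     c3 * (u ^ 2 + u * v + v ^ 2) + c2 * (u + v) + c1 = 0).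
  { intros u v duv Eu Ev.
    assert (X : (u - v) * (c3 * (u ^ 2 + u * v + v ^ 2) + c2 * (u + v) + c1) = 0).
    { transitivity ((c3 * u ^ 3 + c2 * u ^ 2 + c1 * u + c0) - (c3 * v ^ 3 + c2 * v ^ 2 + c1 * v + c0)).
      ring. rewrite Eu, Ev. ring. }
    apply Rmult_integral in X. destruct X; auto. exfalso; apply duv; lra. }
  pose proof (Q _ _ d12 E1 E2) as Q12. pose proof (Q _ _ d13 E1 E3) as Q13.
  pose proof (Q _ _ d14 E1 E4) as Q14.
  assert (R : forall v w, v <> w ->
     c3 * (t1 ^ 2 + t1 * v + v ^ 2) + c2 * (t1 + v) + c1 = 0 ->
     c3 * (t1 ^ 2 + t1 * w + w ^ 2) + c2 * (t1 + w) + c1 = 0 ->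
     c3 * (t1 + v + w) + c2 = 0).
  { intros v w dvw Ev Ew.
    assert (X : (v - w) * (c3 * (t1 + v + w) + c2) = 0).
    { transitivity ((c3 * (t1 ^ 2 + t1 * v + v ^ 2) + c2 * (t1 + v) + c1)
        - (c3 * (t1 ^ 2 + t1 * w + w ^ 2) + c2 * (t1 + w) + c1)).
      ring. rewrite Ev, Ew. ring. }
    apply Rmult_integral in X. destruct X; auto. exfalso; apply dvw; lra. }
  pose proof (R _ _ d23 Q12 Q13) as R23. pose proof (R _ _ d24 Q12 Q14) as R24.
  assert (X : (t3 - t4) * c3 = 0) by (transitivity ((c3 * (t1 + t2 + t3) + c2) - (c3 * (t1 + t2 + t4) + c2)); [ring | rewrite R23, R24; ring]).
  apply Rmult_integral in X. destruct X as [X|X]. { exfalso; apply d34; lra. }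
  subst c3. assert (c2 = 0) by lra. subst c2. assert (c1 = 0) by lra. subst c1.
  repeat split; lra.
Qed.

Lemma t_props z : 0 < z < 1 -> 0 < sqrt (1 - z ^ 2) < 1 /\ sqrt (1 - z ^ 2) ^ 2 = 1 - z ^ 2.
Proof.
  intros Hz. assert (Hz2 : 0 < 1 - z ^ 2) by nra.
  pose proof (sqrt_lt_R0 _ Hz2). pose proof (pow2_sqrt (1 - z ^ 2) ltac:(lra)).
  split; [split|]; auto. nra.
Qed.

Lemma zero_Pc a b rr Y z : Hyp rr Y -> 0 < z < 1 -> f1 a b rr Y z = 0 ->
  Pc a b (sqrt (1 - z ^ 2)) = 0.
Proof.
  intros H Hz E. rewrite f1_g in E; auto. unfold gfun in E.
  destruct (t_props z Hz) as [[T1 T2] _]. pose proof PI_RGT_0.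
  assert (X : PI * (1 - sqrt (1 - z ^ 2)) * Pc a b (sqrt (1 - z ^ 2)) = 0).
  { replace (PI * (1 - sqrt (1 - z ^ 2)) * Pc a b (sqrt (1 - z ^ 2))) with
      (PI * (1 - sqrt (1 - z ^ 2)) * Pc a b (sqrt (1 - z ^ 2)) / z * z) by (field; lra).
    rewrite E. ring. }
  apply Rmult_integral in X. destruct X as [X|X]; auto.
  apply Rmult_integral in X. destruct X; lra.
Qed.

Lemma t_inj z1 z2 : 0 < z1 < 1 -> 0 < z2 < 1 -> z1 <> z2 -> sqrt (1 - z1 ^ 2) <> sqrt (1 - z2 ^ 2).
Proof.
  intros H1 H2 D E. destruct (t_props z1 H1) as [_ S1]. destruct (t_props z2 H2) as [_ S2].
  rewrite E in S1. rewrite S1 in S2. apply D. nra.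
Qed.

Lemma at_most3 a b rr Y (l : list R) : Hyp rr Y -> NoDup l ->
  (forall z, In z l -> 0 < z < 1 /\ simple_zero (f1 a b rr Y) z) -> (length l <= 3)%nat.
Proof.
  intros H ND Hl.
  destruct l as [|z1 [|z2 [|z3 [|z4 l']]]]; simpl; try lia. exfalso.
  apply NoDup_cons_iff in ND. destruct ND as [N1 ND].
  apply NoDup_cons_iff in ND. destruct ND as [N2 ND].
  apply NoDup_cons_iff in ND. destruct ND as [N3 ND].
  assert (d12 : z1 <> z2) by (intro; apply N1; subst; simpl; auto).
  assert (d13 : z1 <> z3) by (intro; apply N1; subst; simpl; auto).
  assert (d14 : z1 <> z4) by (intro; apply N1; subst; simpl; auto).
  assert (d23 : z2 <> z3) by (intro; apply N2; subst; simpl; auto).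
  assert (d24 : z2 <> z4) by (intro; apply N2; subst; simpl; auto).
  assert (d34 : z3 <> z4) by (intro; apply N3; subst; simpl; auto).
  destruct (Hl z1 ltac:(simpl; auto)) as [I1 [Z1 [l1 [D1 L1]]]].
  destruct (Hl z2 ltac:(simpl; auto)) as [I2 [Z2 _]].
  destruct (Hl z3 ltac:(simpl; auto)) as [I3 [Z3 _]].
  destruct (Hl z4 ltac:(simpl; auto)) as [I4 [Z4 _]].
  apply zero_Pc in Z1, Z2, Z3, Z4; auto. unfold Pc in Z1, Z2, Z3, Z4.
  destruct (cubic4 _ _ _ _ _ _ _ _ (t_inj _ _ I1 I2 d12) (t_inj _ _ I1 I3 d13)
     (t_inj _ _ I1 I4 d14) (t_inj _ _ I2 I3 d23) (t_inj _ _ I2 I4 d24) (t_inj _ _ I3 I4 d34)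
     Z1 Z2 Z3 Z4) as [C3 [C2 [C1 C0]]].
  assert (Hloc : locally z1 (fun x => (fun _ : R => 0) x = f1 a b rr Y x)).
  { apply (locally_interval _ z1 0 1); simpl; try lra.
    intros y Y1 Y2. rewrite f1_g; auto. unfold gfun, Pc. rewrite C3, C2, C1, C0.
    field. lra. }
  assert (D0 : is_derive (f1 a b rr Y) z1 0).
  { apply (is_derive_ext_loc _ _ _ _ Hloc). auto_derive; auto. }
  apply is_derive_unique in D0. apply is_derive_unique in D1. congruence.
Qed.

Definition aex (i j : nat) : R :=
  match i, j with 1%nat, 0%nat => 271 / 2 | 1%nat, 2%nat => - 391 / 2 | _, _ => 0 end.
Definition bex (i j : nat) : R :=
  match i, j with 0%nat, 1%nat => - 255 / 2 | 2%nat, 1%nat => - 905 / 2 | _, _ => 0 end.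

Lemma Pc_ex t : Pc aex bex t = 325 * (t - 5 / 13) * (t - 3 / 5) * (t - 4 / 5).
Proof. unfold Pc; cbn [aex bex]. field. Qed.

Lemma sq_val z t : 0 < z -> 0 < t -> z ^ 2 + t ^ 2 = 1 -> sqrt (1 - z ^ 2) = t.
Proof. intros. replace (1 - z ^ 2) with (t ^ 2) by lra. apply sqrt_pow2; lra. Qed.

Lemma z_val z z0 t0 : 0 < z < 1 -> 0 < z0 -> t0 ^ 2 + z0 ^ 2 = 1 ->
  sqrt (1 - z ^ 2) = t0 -> z = z0.
Proof.
  intros Hz H0 H1 E. destruct (t_props z Hz) as [_ S]. rewrite E in S.
  assert ((z - z0) * (z + z0) = 0) by nra.
  apply Rmult_integral in H. destruct H; lra.
Qed.

Lemma simple_ex rr Y z t k : Hyp rr Y -> 0 < z < 1 -> 0 < t -> z ^ 2 + t ^ 2 = 1 ->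
  Pc aex bex t = 0 ->
  (PI * ((z / t) * Pc aex bex t + (1 - t) * dPc aex bex t * (- z / t)) / z
     - PI * (1 - t) * Pc aex bex t / z ^ 2) = k * PI -> k <> 0 ->
  simple_zero (f1 aex bex rr Y) z.
Proof.
  intros H Hz Ht Hzt HP Hk k0.
  assert (St : sqrt (1 - z ^ 2) = t) by (apply sq_val; lra).
  split.
  - rewrite f1_g; auto. unfold gfun. rewrite St, HP. field. lra.
  - exists (k * PI). split.
    + apply (is_derive_ext_loc _ _ _ _ (f1_loc aex bex rr Y z H Hz)).
      pose proof (g_deriv aex bex z Hz) as G. cbv zeta in G. rewrite St in G.
      rewrite Hk in G. exact G.
    + apply Rmult_integral_contrapositive_currified; auto. apply PI_neq0.
Qed.

Lemma exists3 rr Y : Hyp rr Y ->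
     (exists a b z1 z2 z3,
        0 < z1 < z2 /\ z2 < z3 < 1 /\
        simple_zero (f1 a b rr Y) z1 /\ simple_zero (f1 a b rr Y) z2 /\
        simple_zero (f1 a b rr Y) z3 /\
        (forall z, 0 < z < 1 -> simple_zero (f1 a b rr Y) z ->
           z = z1 \/ z = z2 \/ z = z3)).
Proof.
  intros H. exists aex, bex, (3/5), (4/5), (12/13).
  split; [lra|]. split; [lra|].
  split; [|split; [|split]].
  - apply (simple_ex rr Y (3/5) (4/5) (-27/4)); [exact H | lra | lra | lra | rewrite Pc_ex; ring | | lra].
    rewrite Pc_ex. unfold dPc. cbn [aex bex]. field.
  - apply (simple_ex rr Y (4/5) (3/5) (28/3)); [exact H | lra | lra | lra | rewrite Pc_ex; ring | | lra].
    rewrite Pc_ex. unfold dPc. cbn [aex bex]. field.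
  - apply (simple_ex rr Y (12/13) (5/13) (-3024/65)); [exact H | lra | lra | lra | rewrite Pc_ex; ring | | lra].
    rewrite Pc_ex. unfold dPc. cbn [aex bex]. field.
  - intros z Hz [Z0 _]. pose proof (zero_Pc aex bex rr Y z H Hz Z0) as Z. rewrite Pc_ex in Z.
    apply Rmult_integral in Z. destruct Z as [Z|Z].
    + apply Rmult_integral in Z. destruct Z as [Z|Z].
      * apply Rmult_integral in Z. destruct Z as [Z|Z]. lra.
        right; right. apply (z_val z (12/13) (5/13)); lra.
      * right; left. apply (z_val z (4/5) (3/5)); lra.
    + left. apply (z_val z (3/5) (4/5)); lra.
Qed.

Theorem mainTheorem5 :
  (* the unperturbed equation is dr/dth = r^3 cos th sin th *)
  (forall th r, r <> 0 -> F0 th r = r ^ 3 * cos th * sin th) /\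
  (* r(th,z) = z / sqrt(1 - z^2 sin^2 th) solves it with r(0,z) = z *)
  (forall z, 0 < z < 1 ->
     rsol 0 z = z /\
     (forall th, is_derive (fun t => rsol t z) th (F0 th (rsol th z))) /\
     (forall th, rsol (th + 2 * PI) z = rsol th z)) /\
  (* it is defined and positive for all th exactly when z is in D = (0,1) *)
  (forall z, (0 < z < 1) <->
     (forall th, 0 < 1 - z ^ 2 * (sin th) ^ 2 /\ 0 < rsol th z)) /\
  (* for any solutions r(th,z), Y(th,z) of the defining initial value problems: *)
  (forall rr Y : R -> R -> R,
     (forall z, 0 < z < 1 ->
        rr 0 z = z /\
        (forall th, is_derive (fun t => rr t z) th (F0 th (rr th z))) /\
        Y 0 z = 1 /\
        (forall th, is_derive (fun t => Y t z) th
                      (Derive (fun r => F0 th r) (rr th z) * Y th z))) ->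
     (* the formula for z f1(z) *)
     (forall a b z, 0 < z < 1 -> z * f1 a b rr Y z = f1_formula a b z) /\
     (* at most 3 simple zeros in (0,1) *)
     (forall a b (l : list R), NoDup l ->
        (forall z, In z l -> 0 < z < 1 /\ simple_zero (f1 a b rr Y) z) ->
        (length l <= 3)%nat) /\
     (* and exactly 3 is attained *)
     (exists a b z1 z2 z3,
        0 < z1 < z2 /\ z2 < z3 < 1 /\
        simple_zero (f1 a b rr Y) z1 /\ simple_zero (f1 a b rr Y) z2 /\
        simple_zero (f1 a b rr Y) z3 /\
        (forall z, 0 < z < 1 -> simple_zero (f1 a b rr Y) z ->
           z = z1 \/ z = z2 \/ z = z3))).

Proof.
  split. { intros th r _. apply F0_eq. }
  split.
  { intros z Hz. split; [|split].
    - unfold rsol. rewrite sin_0. replace (1 - z ^ 2 * 0 ^ 2) with 1 by ring.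
      rewrite sqrt_1. field.
    - intro th. apply rsol_deriv; auto.
    - intro th. unfold rsol. rewrite sin_2PIp. reflexivity. }
  split. { apply part3. }
  intros rr Y H. assert (H' : Hyp rr Y) by exact H.
  split; [|split].
  - intros a b z Hz. rewrite (f1_val a b rr Y z Hz (H z Hz)). apply formula_eq; auto.
  - intros a b l ND Hl. apply (at_most3 a b rr Y l H' ND Hl).
  - apply exists3; auto.
Qed.
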